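(* Let $(\pi_r)_{r\in\mathbb{N}}$ be periods with $\pi_r\ge2$ for all $r$, and let $(K_t)_{t\in\mathbb{N}}$ be the multiperiodic process with periods $(\pi_r)$. For $T\in\mathbb{N}$ define the random set of types $\mathcal{N}_T:=\{K_1,\dots,K_T\}\cap\mathbb{N}$, and the deterministic sets $$\mathcal{A}_T:=\{r\in\mathbb{N}:\bar w_r\le T\},\qquad \mathcal{B}_T:=\{r\in\mathbb{N}:P(K_1=r)\ge 1/T\},$$ where $\bar w_r:=v_1$ with $v_r:=\pi_r$ and $v_i:=v_{i+1}\pi_i/(\pi_i-1)+1$ for $i=r-1,\dots,1$. Then $$\operatorname{card}\mathcal{A}_T\le \mathbb{E}\operatorname{card}\mathcal{N}_T\le \operatorname{card}\mathcal{B}_T+T\,P(K_1\notin\mathcal{B}_T).$$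
   Context: $\mathbb{N}=\{1,2,3,\dots\}$. Multiperiodic sequence with periods $\pi_r\in\mathbb{N}$ and seeds $\sigma_r\in\{1,\dots,\pi_r\}$: the sequence $(k_t)_{t\in\mathbb{N}}$ with values in $\mathbb{N}\cup\{\infty\}$ such that for each $r$, the subsequence obtained from $(k_t)$ by deleting all tokens $k_t<r$, denoted $(k^{(r)}_t)_{t\in\mathbb{N}}$, satisfies $k^{(r)}_t=r\iff t\equiv\sigma_r\pmod{\pi_r}$; entries left undefined for all $r$ are set to $\infty$. Equivalently: clocks $\phi_r$ start at $\sigma_r$; for each token, scan $r=1,2,\dots$, decrementing each clock with $\phi_r>1$, until the first $r$ with $\phi_r=1$, output that $r$ and reset $\phi_r=\pi_r$. The multiperiodic process with periods $(\pi_r)$ is the random multiperiodic sequence with these periods and independent random seeds $\Sigma_r$ uniformly distributed on $\{1,\dots,\pi_r\}$; it is stationary, so $P(K_t=r)$ does not depend on $t$. *)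

(* Defs.v *)
From HB Require Import structures.
From mathcomp Require Import all_boot all_order all_algebra.
From mathcomp Require Import all_classical all_reals all_analysis.
Set Implicit Arguments. Unset Strict Implicit. Unset Printing Implicit Defensive.
Import Order.TTheory GRing.Theory Num.Theory.
Local Open Scope ring_scope.

(* Types are indexed by r >= 1 (nat index 0 is unused); clocks are
   functions phi : nat -> nat, phi r = current value of clock r. *)

(* One scan of the clock algorithm restricted to clocks r, r+1, ..., r+fuel-1.
   Returns the output type (0 if no clock in that range rings) and the
   updated clocks. *)
Fixpoint scan (pi phi : nat -> nat) (r fuel : nat) : nat * (nat -> nat) :=
  match fuel with
  | 0 => (0%N, phi)
  | fuel'.+1 =>
      if phi r == 1%N then (r, fun j => if j == r then pi r else phi j)
      else scan pi (fun j => if j == r then (phi r).-1 else phi j) r.+1 fuel'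
  end.

Definition clocks (pi sigma : nat -> nat) (R t : nat) : nat -> nat :=
  iter t (fun phi => (scan pi phi 1 R).2) sigma.

(* The t-th token (t >= 1) of the algorithm truncated to types 1..R
   (0 means "no type <= R rings"). *)
Definition token (pi sigma : nat -> nat) (R t : nat) : nat :=
  (scan pi (clocks pi sigma R t.-1) 1 R).1.

(* K_t = r (for a finite type r >= 1) in the multiperiodic sequence with
   periods pi and seeds sigma.  Since the scan visits types in increasing
   order, the evolution of clocks 1..r does not depend on clocks > r, so
   K_t = r iff the algorithm truncated to types 1..r outputs r at time t. *)
Definition Kis (pi sigma : nat -> nat) (t r : nat) : bool :=
  (0 < r)%N && (token pi sigma r t == r).

(* v-recursion: vrec pi r n = v_{r-n}, with v_r = pi_r and
   v_i = v_{i+1} pi_i / (pi_i - 1) + 1. *)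
Fixpoint vrec (R : realType) (pi : nat -> nat) (r n : nat) : R :=
  match n with
  | 0 => (pi r)%:R
  | n'.+1 => let i := (r - n'.+1)%N in
             vrec R pi r n' * (pi i)%:R / ((pi i)%:R - 1) + 1
  end.

Definition wbar (R : realType) (pi : nat -> nat) (r : nat) : R :=
  vrec R pi r (r.-1).

(* Main.v *)
Require Import Defs.
From HB Require Import structures.
From mathcomp Require Import all_boot all_order all_algebra.
From mathcomp Require Import all_classical all_reals all_analysis.
From mathcomp Require Import measurable_realfun.
From mathcomp Require Import zify.
Import Order.TTheory GRing.Theory Num.Theory.
Set Implicit Arguments. Unset Strict Implicit. Unset Printing Implicit Defensive.

Section Comb.
Variable pi : nat -> nat.
Hypothesis hpi : forall r : nat, (0 < r)%N -> (2 <= pi r)%N.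

Lemma scan_lt n : forall m phi j, (j < m)%N -> (scan pi phi m n).2 j = phi j.
Proof.
elim: n => [|n IH] m phi j hj //=.
case: ifP => _ /=; first by rewrite (ltn_eqF hj).
by rewrite IH ?(ltn_eqF hj) // ltnW.
Qed.

Lemma scan_prefix n : forall k m phi, (0 < m)%N ->
  scan pi phi m (n + k) = if (scan pi phi m n).1 != 0%N then scan pi phi m n
                          else scan pi (scan pi phi m n).2 (m + n) k.
Proof.
elim: n => [|n IH] k m phi hm /=; first by rewrite addn0.
case: ifP => _ /=; first by rewrite -lt0n hm.
by rewrite IH // addSnnS.
Qed.

Lemma scan_dep n : forall m phi phi',
  (forall j, (m <= j < m + n)%N -> phi j = phi' j) ->
  (scan pi phi m n).1 = (scan pi phi' m n).1 /\
  (forall j, phi j = phi' j -> (scan pi phi m n).2 j = (scan pi phi' m n).2 j).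
Proof.
elim: n => [|n IH] m phi phi' h /=; first by split.
have hm : phi m = phi' m by apply: h; rewrite leqnn /= addnS ltnS leq_addr.
rewrite hm; case: ifP => _ /=.
  by split=> // j hj; case: eqP.
set f := (fun j => if j == m then (phi' m).-1 else phi j).
set f' := (fun j => if j == m then (phi' m).-1 else phi' j).
have hff : forall j, (m.+1 <= j < m.+1 + n)%N -> f j = f' j.
  move=> j /andP[j1 j2]; rewrite /f /f' (gtn_eqF j1) h // (ltnW j1) /=.
  by rewrite -addSnnS.
have [h1 h2] := IH m.+1 f f' hff.
split=> // j hj; apply: h2; rewrite /f /f'; case: eqP => //.
Qed.

Definition validr (phi : nat -> nat) m n :=
  forall j, (m <= j < m + n)%N -> (1 <= phi j <= pi j)%N.

Lemma scan_valid n : forall m phi, (0 < m)%N -> validr phi m n ->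
  validr (scan pi phi m n).2 m n.
Proof.
elim: n => [|n IH] m phi hm hv //=.
have hvm := hv m; rewrite leqnn addnS ltnS leq_addr in hvm.
have {hvm} /andP[hm1 hm2] := hvm isT.
case: ifP => e /=.
  move=> j hj; case: eqP => [->|ne]; last by apply: hv.
  by have := hpi hm; lia.
set f := (fun j => if j == m then (phi m).-1 else phi j).
have hf : validr f m.+1 n.
  move=> j /andP[j1 j2]; rewrite /f (gtn_eqF j1); apply: hv.
  by rewrite (ltnW j1) addnS.
have := IH m.+1 f isT hf.
move=> hv2 j /andP[j1 j2].
have [->|ne] := eqVneq j m.
  rewrite scan_lt // /f eqxx.
  by move/eqP: e; lia.
apply: hv2; rewrite addSnnS j2 andbT; lia.
Qed.

Lemma scan_inj n : forall m phi phi', (0 < m)%N -> validr phi m n -> validr phi' m n ->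
  (forall j, (m <= j < m + n)%N -> (scan pi phi m n).2 j = (scan pi phi' m n).2 j) ->
  forall j, (m <= j < m + n)%N -> phi j = phi' j.
Proof.
elim: n => [|n IH] m phi phi' hm hv hv' heq j hj /=; first by lia.
have hmm : (m <= m < m + n.+1)%N by rewrite leqnn addnS ltnS leq_addr.
have /andP[a1 a2] := hv m hmm.
have /andP[b1 b2] := hv' m hmm.
have e := heq m hmm; move: heq e => /=.
set f := (fun j => if j == m then (phi m).-1 else phi j).
set f' := (fun j => if j == m then (phi' m).-1 else phi' j).
have hf : validr f m.+1 n.
  move=> i /andP[j1 j2]; rewrite /f (gtn_eqF j1); apply: hv.
  by rewrite (ltnW j1) addnS.
have hf' : validr f' m.+1 n.
  move=> i /andP[j1 j2]; rewrite /f' (gtn_eqF j1); apply: hv'.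
  by rewrite (ltnW j1) addnS.
case: ifP => e1; case: ifP => e2 /=.
- rewrite eqxx => heq _.
  have [->|ne] := eqVneq j m; first by move/eqP: e1 => ->; move/eqP: e2 => ->.
  have := heq j hj; rewrite (negbTE ne) //.
- rewrite eqxx scan_lt // /f' eqxx => _ e.
  by move/eqP: e2; lia.
- rewrite eqxx scan_lt // /f eqxx => _ e.
  by move/eqP: e1; lia.
- move=> heq e.
  have hrec : forall i, (m.+1 <= i < m.+1 + n)%N -> f i = f' i.
    apply: IH => // i /andP[i1 i2]; apply: heq.
    by rewrite (ltnW i1) /= addnS -addSn.
  have [->|ne] := eqVneq j m.
    rewrite !scan_lt // /f /f' eqxx in e.
    by move/eqP: e1; move/eqP: e2; lia.
  have := hrec j; rewrite /f /f' (negbTE ne); apply.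
  move/andP: hj => [j1 j2]; apply/andP; split; first by lia.
  by rewrite addSn -addnS.
Qed.

Definition stepL i r phi := (scan pi phi i (r.+1 - i)).2.
Definition outL i r phi n := (scan pi (iter n.-1 (stepL i r) phi) i (r.+1 - i)).1.

Lemma scan_unfold i r phi : (i < r)%N ->
  scan pi phi i (r.+1 - i) =
  if phi i == 1%N then (i, fun j => if j == i then pi i else phi j)
  else scan pi (fun j => if j == i then (phi i).-1 else phi j) i.+1 (r.+1 - i.+1).
Proof. by move=> h; rewrite subSn 1?ltnW // subSS. Qed.

Lemma outL_succ i r phi n : (0 < n)%N -> outL i r phi n.+1 = outL i r (stepL i r phi) n.
Proof. by case: n => // n _; rewrite /outL /= -iterSr. Qed.

Lemma agree_dep i r phi phi' : (i <= r.+1)%N ->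
  (forall j, (i <= j <= r)%N -> phi j = phi' j) ->
  (scan pi phi i (r.+1 - i)).1 = (scan pi phi' i (r.+1 - i)).1 /\ (forall j, (i <= j <= r)%N -> (scan pi phi i (r.+1 - i)).2 j = (scan pi phi' i (r.+1 - i)).2 j).
Proof.
move=> hi h.
have hh : forall j, (i <= j < i + (r.+1 - i))%N -> phi j = phi' j.
  move=> j /andP[j1 j2]; apply: h; rewrite j1 /=; lia.
have [h1 h2] := @scan_dep (r.+1 - i) i phi phi' hh.
by split=> // j hj; apply: h2; apply: h.
Qed.

Lemma iter_agree i r phi phi' n : (i <= r.+1)%N ->
  (forall j, (i <= j <= r)%N -> phi j = phi' j) ->
  (forall j, (i <= j <= r)%N -> iter n (stepL i r) phi j = iter n (stepL i r) phi' j).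
Proof.
move=> hi h; elim: n => [|n IH] //=.
move=> j hj /=; rewrite /stepL; have [_ h2] := agree_dep hi IH; exact: h2.
Qed.

Lemma outL_agree i r phi phi' n : (i <= r.+1)%N ->
  (forall j, (i <= j <= r)%N -> phi j = phi' j) -> outL i r phi n = outL i r phi' n.
Proof.
move=> hi h; rewrite /outL; have [h1 _] := agree_dep hi (iter_agree n.-1 hi h); exact: h1.
Qed.

Lemma stepL_valid i r phi : (0 < i)%N -> validr phi i (r.+1 - i) ->
  validr (stepL i r phi) i (r.+1 - i).
Proof. by move=> hi hv; apply: scan_valid. Qed.

Lemma validrE phi i r : (i <= r.+1)%N ->
  validr phi i (r.+1 - i) <-> (forall j, (i <= j <= r)%N -> (1 <= phi j <= pi j)%N).
Proof.
move=> hi; split=> h j /andP[j1 j2]; apply: h; rewrite j1 /=; lia.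
Qed.

Lemma base_level r a : forall phi, (0 < a)%N -> phi r = a -> outL r r phi a = r.
Proof.
elim: a => [|a IH] phi // _ ha.
have e : (r.+1 - r = 1)%N by lia.
case: a IH ha => [|a] IH ha.
  by rewrite /outL /= e /= ha eqxx.
rewrite outL_succ // IH //.
rewrite /stepL e /= ha /= eqxx //.
Qed.

Lemma stepL_unfold i r phi : (i < r)%N ->
  stepL i r phi = if phi i == 1%N then (fun j => if j == i then pi i else phi j)
    else stepL i.+1 r (fun j => if j == i then (phi i).-1 else phi j).
Proof. by move=> h; rewrite /stepL scan_unfold //; case: ifP. Qed.

Lemma out1_unfold i r phi : (i < r)%N ->
  outL i r phi 1 = if phi i == 1%N then i
    else outL i.+1 r (fun j => if j == i then (phi i).-1 else phi j) 1.
Proof. by move=> h; rewrite /outL /= scan_unfold //; case: ifP. Qed.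

Lemma level_step i r : (0 < i)%N -> (i < r)%N -> forall m phi,
  validr phi i (r.+1 - i) -> outL i.+1 r phi m.+1 = r ->
  exists n, [/\ (0 < n)%N, outL i r phi n = r &
    (n * (pi i - 1) + phi i <= m.+1 * pi i + pi i - 1)%N].
Proof.
move=> hi hir; have hpii := hpi hi.
have hir1 : (i <= r.+1)%N by lia.
have hiS : (i.+1 <= r.+1)%N by lia.
have agS : forall phi a, outL i.+1 r (fun j => if j == i then a else phi j) =1 outL i.+1 r phi.
  move=> phi a n; apply: outL_agree => // j /andP[j1 _].
  by rewrite (gtn_eqF j1).
have vS : forall phi a, (1 <= a <= pi i)%N -> validr phi i (r.+1 - i) ->
    validr (stepL i.+1 r (fun j => if j == i then a else phi j)) i (r.+1 - i).
  move=> phi a ha hv; apply/validrE => // j /andP[j1 j2].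
  have [->|ne] := eqVneq j i; first by rewrite /stepL scan_lt // eqxx.
  have hv2 : validr (fun j => if j == i then a else phi j) i.+1 (r.+1 - i.+1).
    apply/validrE => // l /andP[l1 l2]; rewrite (gtn_eqF l1).
    by move/validrE: hv => /(_ hir1); apply; rewrite (ltnW l1).
  have := stepL_valid (ltn0Sn i) hv2; move/validrE => /(_ hiS); apply.
  by rewrite j2 andbT ltn_neqAle eq_sym ne.
elim=> [|m IH] phi hv hout.
- have A : forall phi, validr phi i (r.+1 - i) -> (2 <= phi i)%N ->
      outL i.+1 r phi 1 = r -> exists n, [/\ (0 < n)%N, outL i r phi n = r &
      (n * (pi i - 1) + phi i <= 1 * pi i + pi i - 1)%N].
    move=> ph hv2 h2 ho; exists 1%N; split => //.
      by rewrite out1_unfold // ifF ?agS //; apply/negbTE; lia.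
    have := hv2 i; rewrite leqnn /=; move/(_ ltac:(lia)); lia.
  have [h2|h1] := leqP 2 (phi i); first by apply: A.
  have e1 : phi i = 1%N by have := hv i; rewrite leqnn /=; move/(_ ltac:(lia)); lia.
  set psi := stepL i r phi.
  have epsi : psi = (fun j => if j == i then pi i else phi j).
    by rewrite /psi stepL_unfold // e1 eqxx.
  have [n' [n0 ho hb]] : exists n, [/\ (0 < n)%N, outL i r psi n = r &
      (n * (pi i - 1) + psi i <= 1 * pi i + pi i - 1)%N].
    apply: A.
    + rewrite epsi; apply/validrE => // j hj; case: eqP => [->|_]; first lia.
      by move/validrE: hv => /(_ hir1); apply.
    + by rewrite epsi eqxx.
    + by rewrite epsi agS.
  exists n'.+1; split => //; first by rewrite outL_succ.
  move: hb; rewrite epsi eqxx e1 mulSn; lia.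
- have A : forall phi, validr phi i (r.+1 - i) -> (2 <= phi i)%N ->
      outL i.+1 r phi m.+2 = r -> exists n, [/\ (0 < n)%N, outL i r phi n = r &
      (n * (pi i - 1) + phi i <= m.+2 * pi i + pi i - 1)%N].
    move=> ph hv2 h2 ho.
    have hb : (1 <= (ph i).-1 <= pi i)%N.
      by have := hv2 i; rewrite leqnn /=; move/(_ ltac:(lia)); lia.
    set psi := stepL i r ph.
    have epsi : psi = stepL i.+1 r (fun j => if j == i then (ph i).-1 else ph j).
      by rewrite /psi stepL_unfold // ifF //; apply/negbTE; lia.
    have hvp : validr psi i (r.+1 - i) by rewrite epsi; apply: vS.
    have hop : outL i.+1 r psi m.+1 = r by rewrite epsi -outL_succ // agS.
    have [n' [n0 ho' hb']] := IH psi hvp hop.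
    exists n'.+1; split => //; first by rewrite outL_succ.
    move: hb'; rewrite epsi /stepL scan_lt // eqxx !mulSn; lia.
  have [h2|h1] := leqP 2 (phi i); first by apply: A.
  have e1 : phi i = 1%N by have := hv i; rewrite leqnn /=; move/(_ ltac:(lia)); lia.
  set psi := stepL i r phi.
  have epsi : psi = (fun j => if j == i then pi i else phi j).
    by rewrite /psi stepL_unfold // e1 eqxx.
  have [n' [n0 ho hb]] : exists n, [/\ (0 < n)%N, outL i r psi n = r &
      (n * (pi i - 1) + psi i <= m.+2 * pi i + pi i - 1)%N].
    apply: A.
    + rewrite epsi; apply/validrE => // j hj; case: eqP => [->|_]; first lia.
      by move/validrE: hv => /(_ hir1); apply.
    + by rewrite epsi eqxx.
    + by rewrite epsi agS.
  exists n'.+1; split => //; first by rewrite outL_succ.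
  move: hb; rewrite epsi eqxx e1 mulSn; lia.
Qed.

Lemma outL_token r sigma n : outL 1 r sigma n = token pi sigma r n.
Proof. by rewrite /outL /stepL /token /clocks subSS subn0. Qed.

Lemma lower_level (R : realType) r : (0 < r)%N -> forall k, (k < r)%N ->
  forall phi, validr phi (r - k) (r.+1 - (r - k)) ->
  exists n, [/\ (0 < n)%N, outL (r - k) r phi n = r & (n%:R <= vrec R pi r k :> R)%R].
Proof.
move=> r0; elim=> [|k IH] hk phi hv.
  rewrite subn0 in hv *.
  have /andP[a1 a2] := hv r ltac:(lia).
  exists (phi r); split => //; first exact: base_level.
  by rewrite /= ler_nat.
set i := (r - k.+1)%N.
have ei : i.+1 = (r - k)%N by rewrite /i; lia.
have hi0 : (0 < i)%N by rewrite /i; lia.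
have hir : (i < r)%N by rewrite /i; lia.
have hv' : validr phi (r - k) (r.+1 - (r - k)).
  apply/validrE; first lia.
  move=> j /andP[j1 j2]; apply: hv; apply/andP; split; lia.
have [m [m0 hm hmv]] := IH (ltnW hk) phi hv'.
case: m m0 hm hmv => // m _ hm hmv.
rewrite -ei in hm.
have [n [n0 hn hb]] := level_step hi0 hir hv hm.
exists n; split => //.
have hp := hpi hi0.
have pi1 : (1 <= phi i)%N by have := hv i; rewrite leqnn /=; move/(_ ltac:(lia)); lia.
rewrite /=. rewrite -/i.
set p := pi i; set v := vrec R pi r k.
have hq : (0 < p%:R - 1 :> R)%R by rewrite subr_gt0 ltr1n.
have key : (n%:R * (p%:R - 1) <= m.+1%:R * p%:R + (p%:R - 1) :> R)%R.
  have -> : (p%:R - 1 = (p - 1)%:R :> R)%R by rewrite natrB //; lia.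
  rewrite -!natrM -natrD ler_nat; rewrite /p; lia.
apply: (le_trans (y := (m.+1%:R * p%:R / (p%:R - 1) + 1)%R)).
  rewrite -(ler_pM2r hq) mulrDl mul1r divfK ?(gt_eqF hq) //.
rewrite lerD2r; apply: ler_wpM2r; first by rewrite invr_ge0 ltW.
by apply: ler_wpM2r.
Qed.

Lemma lower_main (R : realType) r sigma T : (0 < r)%N ->
  (forall j, (1 <= j <= r)%N -> (1 <= sigma j <= pi j)%N) ->
  (wbar R pi r <= T%:R)%R -> exists t, (1 <= t <= T)%N /\ token pi sigma r t = r.
Proof.
move=> r0 hv hw.
have hk : (r.-1 < r)%N by lia.
have e1 : (r - r.-1 = 1)%N by lia.
have hv' : validr sigma (r - r.-1) (r.+1 - (r - r.-1)).
  by rewrite e1; apply/validrE.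
have [n [n0 hn hb]] := @lower_level R r r0 r.-1 hk sigma hv'.
rewrite e1 outL_token in hn.
exists n; split => //; rewrite n0 /=.
by rewrite -(ler_nat R); apply: le_trans hw.
Qed.

Lemma clocks_trunc r r' sigma t : (r <= r')%N ->
  forall j, (1 <= j <= r)%N -> clocks pi sigma r' t j = clocks pi sigma r t j.
Proof.
move=> hr; elim: t => [|t IH] j hj //=.
set ph' := clocks pi sigma r' t; set ph := clocks pi sigma r t.
have hag : forall l, (1 <= l < 1 + r)%N -> ph' l = ph l.
  by move=> l hl; apply: IH; rewrite add1n ltnS in hl.
have [_ h2] := @scan_dep r 1 ph' ph hag.
rewrite -(subnKC hr) scan_prefix //; case: ifP => _; first by apply: h2; apply: hag; lia.
rewrite scan_lt; last lia.
by apply: h2; apply: hag; lia.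
Qed.

Lemma token_prefix r r' sigma t : (r <= r')%N -> (0 < r)%N ->
  token pi sigma r t = r -> token pi sigma r' t = r.
Proof.
move=> hr r0; rewrite /token.
set ph' := clocks pi sigma r' t.-1; set ph := clocks pi sigma r t.-1.
have hag : forall l, (1 <= l < 1 + r)%N -> ph' l = ph l.
  by move=> l hl; apply: clocks_trunc; rewrite add1n ltnS in hl.
have [h1 _] := @scan_dep r 1 ph' ph hag.
move=> e; rewrite -(subnKC hr) scan_prefix // h1 e -lt0n r0 /=.
by rewrite h1 e.
Qed.

Lemma Kis_uniq sigma t r r' : Kis pi sigma t r -> Kis pi sigma t r' -> r = r'.
Proof.
wlog: r r' / (r <= r')%N.
  by move=> W h h'; have [le|/ltnW le] := leqP r r'; [exact: W | symmetry; exact: W].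
move=> hr /andP[r0 /eqP e] /andP[r0' /eqP e'].
by have := token_prefix hr r0 e; rewrite e'.
Qed.

Lemma token_agree r sigma sigma' t : (forall j, (1 <= j <= r)%N -> sigma j = sigma' j) ->
  token pi sigma r t = token pi sigma' r t.
Proof. by move=> h; rewrite -!outL_token; apply: outL_agree. Qed.

Definition stepT r sigma := (scan pi sigma 1 r).2.

Lemma token_succ r sigma t : (0 < t)%N -> token pi sigma r t.+1 = token pi (stepT r sigma) r t.
Proof. by case: t => // t _; rewrite /token /clocks /= -iterSr. Qed.

Fixpoint boxf (m n : nat) : seq (seq nat) :=
  if n is n'.+1 then [seq k :: s | k <- iota 1 (pi m), s <- boxf m.+1 n'] else [:: [::]].

Definition ext (s : seq nat) : nat -> nat := fun j => nth 0%N s j.-1.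

Lemma mem_boxf n : forall m s, s \in boxf m n <->
  size s = n /\ (forall i, (i < n)%N -> (1 <= nth 0%N s i <= pi (m + i))%N).
Proof.
elim: n => [|n IH] m s /=.
  rewrite inE; split; first by move/eqP->.
  by case: s => [|x s] [] //.
split.
  move/allpairsP => [[k s'] [/= hk /IH[hs hs'] ->]].
  split; first by rewrite /= hs.
  case=> [|i] hi /=; first by move: hk; rewrite mem_iota addn0; lia.
  by rewrite addnS -addSn; apply: hs'.
case: s => [|k s'] [] //= [hs] hv.
apply/allpairsP; exists (k, s'); split => //=.
  by have := hv 0%N isT; rewrite mem_iota addn0 /=; lia.
apply/IH; split => // i hi; rewrite addSn -addnS; exact: (hv i.+1).
Qed.

Lemma uniq_boxf n : forall m, uniq (boxf m n).
Proof.
elim: n => [|n IH] m //=.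
apply: allpairs_uniq => //; first exact: iota_uniq.
by move=> [a b] [c d] _ _ /= [-> ->].
Qed.

Lemma size_boxf n : forall m, size (boxf m n) = \prod_(j <- iota m n) pi j.
Proof.
elim: n => [|n IH] m /=; first by rewrite big_nil.
by rewrite size_allpairs size_iota IH big_cons.
Qed.

Definition box r := boxf 1 r.

Lemma mem_box r s : s \in box r <->
  size s = r /\ (forall j, (1 <= j <= r)%N -> (1 <= ext s j <= pi j)%N).
Proof.
rewrite /box mem_boxf; split=> -[hs hv]; split => //.
  move=> j hj; rewrite /ext; have := hv j.-1; rewrite add1n prednK; last lia.
  by apply; lia.
move=> i hi; have := hv i.+1; rewrite /ext /= add1n; apply; lia.
Qed.

Definition stepseq r s := mkseq (fun i => stepT r (ext s) i.+1) r.

Lemma ext_stepseq r s j : (1 <= j <= r)%N -> ext (stepseq r s) j = stepT r (ext s) j.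
Proof. by move=> hj; rewrite /ext /stepseq nth_mkseq ?prednK //; lia. Qed.

Lemma validr_box r s : s \in box r -> validr (ext s) 1 r.
Proof. by move/mem_box => [_ hv] j hj; apply: hv; rewrite add1n ltnS in hj. Qed.

Lemma stepseq_box r s : s \in box r -> stepseq r s \in box r.
Proof.
move=> hs; have hv := @scan_valid r 1 (ext s) isT (validr_box hs).
apply/mem_box; split; first by rewrite size_mkseq.
move=> j hj; rewrite ext_stepseq //; apply: hv; rewrite add1n ltnS //.
Qed.

Lemma stepseq_inj r : {in box r &, injective (stepseq r)}.
Proof.
move=> s s' hs hs' e.
have hv := validr_box hs; have hv' := validr_box hs'.
have h := @scan_inj r 1 (ext s) (ext s') isT hv hv'.
have hs1 := (proj1 (mem_box r s) hs).1; have hs2 := (proj1 (mem_box r s') hs').1.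
apply: (eq_from_nth (x0 := 0%N)); first by rewrite hs1 hs2.
move=> i hi; have := h _ (i.+1); rewrite /ext /=; apply.
  move=> j hj; rewrite add1n ltnS in hj; have := congr1 (fun x => ext x j) e.
  by rewrite /= !ext_stepseq.
by rewrite add1n ltnS -hs1.
Qed.

Lemma count_stepseq r (a : pred (seq nat)) :
  count a (box r) = count (fun s => a (stepseq r s)) (box r).
Proof.
have hu : uniq [seq stepseq r s | s <- box r].
  by rewrite map_inj_in_uniq ?uniq_boxf //; apply: stepseq_inj.
have hsub : {subset [seq stepseq r s | s <- box r] <= box r}.
  by move=> x /mapP[y hy ->]; apply: stepseq_box.
have [hsz hin] := uniq_min_size hu hsub ltac:(by rewrite size_map).
have /permP p := uniq_perm hu (uniq_boxf _ _) hin.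
by rewrite -p count_map.
Qed.

Lemma count_token_stat r t : (0 < t)%N ->
  count (fun s => token pi (ext s) r t == r) (box r) =
  count (fun s => token pi (ext s) r 1 == r) (box r).
Proof.
elim: t => [|t IH] // _.
case: t IH => [|t] IH //.
rewrite -IH // [RHS]count_stepseq; apply: eq_in_count => s hs /=.
rewrite token_succ //; congr (_ == _); apply: token_agree => j hj.
by rewrite ext_stepseq.
Qed.

Lemma count_Kis_stat r t : (0 < t)%N ->
  count (fun s => Kis pi (ext s) t r) (box r) = count (fun s => Kis pi (ext s) 1 r) (box r).
Proof.
move=> t0; rewrite /Kis; case hr: (0 < r)%N => /=; first exact: count_token_stat.
by rewrite !count_pred0.
Qed.

Lemma count_has (l : seq nat) (p : nat -> pred (seq nat)) (b : seq (seq nat)) :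
  (count (fun s => has (p ^~ s) l) b <= \sum_(t <- l) count (p t) b)%N.
Proof.
elim: l => [|x l IH] /=; first by rewrite big_nil count_pred0.
rewrite big_cons.
have -> : count (fun s => has (p ^~ s) (x :: l)) b = count (predU (p x) (fun s => has (p ^~ s) l)) b.
  by apply: eq_count.
have := count_predUI (p x) (fun s => has (p ^~ s) l) b; lia.
Qed.

Lemma count_Ev_le r T :
  (count (fun s => has (fun t => Kis pi (ext s) t r) (iota 1 T)) (box r)
   <= T * count (fun s => Kis pi (ext s) 1 r) (box r))%N.
Proof.
apply: leq_trans (count_has (iota 1 T) (fun t s => Kis pi (ext s) t r) (box r)) _.
rewrite big_seq (eq_bigr (fun _ => count (fun s => Kis pi (ext s) 1 r) (box r))).
  by rewrite -big_seq big_const_seq count_predT size_iota iter_addn_0 mulnC.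
by move=> t; rewrite mem_iota => /andP[t1 _]; apply: count_Kis_stat.
Qed.
End Comb.

Local Open Scope classical_set_scope.
Local Open Scope ring_scope.
Local Open Scope ereal_scope.

Section Meas.
Context (R : realType) (d : measure_display) (Omega : measurableType d)
  (P : probability Omega R) (pi : nat -> nat) (Sigma : nat -> Omega -> nat).
Hypothesis hpi : forall r : nat, (0 < r)%N -> (2 <= pi r)%N.
Hypothesis hmeas : forall r k : nat, measurable [set w | Sigma r w = k].
Hypothesis hunif : forall r k : nat, (0 < r)%N -> (1 <= k <= pi r)%N ->
     P [set w | Sigma r w = k] = ((pi r)%:R^-1)%:E.
Hypothesis hindep : forall (I : seq nat) (k : nat -> nat), uniq I -> all (fun r => (0 < r)%N) I ->
     P (\bigcap_(r in [set` I]) [set w | Sigma r w = k r])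
     = \prod_(r <- I) P [set w | Sigma r w = k r].

Definition Sig w := fun j => Sigma j w.
Definition dep r (F : (nat -> nat) -> bool) :=
  forall s s', (forall j, (1 <= j <= r)%N -> s j = s' j) -> F s = F s'.

Lemma meas_dep r : forall F, dep r F -> measurable [set w | F (Sig w)].
Proof.
elim: r => [|r IH] F hF.
  have -> : [set w | F (Sig w)] = if F (fun _ => 0%N) then setT else set0.
    have e : forall w, F (Sig w) = F (fun _ => 0%N) by move=> w; apply: hF => j; lia.
    by case: ifP => h; apply/seteqP; split => w //=; rewrite e h.
  by case: ifP.
set G := fun k => [set w | Sigma r.+1 w = k] `&`
                  [set w | F (fun j => if j == r.+1 then k else Sig w j)].
have -> : [set w | F (Sig w)] = \bigcup_(k in setT) G k.
  apply/seteqP; split => w /=.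
    move=> h; exists (Sigma r.+1 w) => //; split => //=.
    by rewrite (hF _ (Sig w)) // => j _; case: eqP => [->|].
  move=> [k _ [/= e h]]; rewrite -(hF (fun j => if j == r.+1 then k else Sig w j) (Sig w)) //.
  by move=> j _; case: eqP => [->|] //.
apply: bigcup_measurable => k _; rewrite /G; apply: measurableI; first exact: hmeas.
apply: (IH (fun s => F (fun j => if j == r.+1 then k else s j))).
move=> s s' h; apply: hF => j hj; case: eqP => // ne; apply: h; lia.
Qed.

Definition atomb (s : seq nat) (sg : nat -> nat) := all (fun j => sg j == ext s j) (iota 1 (size s)).

Lemma dep_atomb s : dep (size s) (atomb s).
Proof.
move=> s1 s2 h; apply: eq_in_all => j; rewrite mem_iota => hj.
by rewrite h //; lia.
Qed.

Definition cc r : R := (\prod_(j <- iota 1 r) (pi j)%:R^-1)%R.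

Lemma cc_ge0 r : (0 <= cc r)%R.
Proof. by apply: prodr_ge0 => j _; rewrite invr_ge0. Qed.

Lemma atomE r s : s \in box pi r -> P [set w | atomb s (Sig w)] = (cc r)%:E.
Proof.
move=> /mem_box [hs hv].
have -> : [set w | atomb s (Sig w)] =
   \bigcap_(j in [set` iota 1 r]) [set w | Sigma j w = ext s j].
  apply/seteqP; split => w /=.
    by move/allP => h j /= hj; apply/eqP; apply: h; rewrite hs.
  by move=> h; apply/allP => j hj; apply/eqP; apply: h; rewrite /= -hs.
rewrite hindep ?iota_uniq; last by apply/allP => j; rewrite mem_iota; lia.
rewrite /cc -prodEFin; apply: eq_big_seq => j; rewrite mem_iota => hj.
  by apply: hunif; [lia | apply: hv; lia].
by [].
Qed.

Lemma atomb_eq r s s' sg : s \in box pi r -> s' \in box pi r ->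
  atomb s sg -> atomb s' sg -> s = s'.
Proof.
move=> /mem_box [hs _] /mem_box [hs' _] /allP h /allP h'.
apply: (eq_from_nth (x0 := 0%N)); first by rewrite hs hs'.
move=> i hi.
have := h i.+1; have := h' i.+1; rewrite !mem_iota /ext /=.
rewrite hs in hi; rewrite hs hs'.
move=> /(_ ltac:(lia)) /eqP <- /(_ ltac:(lia)) /eqP <- //.
Qed.

Definition U (l : seq (seq nat)) := [set w | has (fun s => atomb s (Sig w)) l].

Lemma measU r l : {subset l <= box pi r} -> measurable (U l).
Proof.
move=> hl; apply: (@meas_dep r (fun sg => has (fun s => atomb s sg) l)).
move=> s1 s2 h; apply: eq_in_has => s hs; apply: dep_atomb => j hj.
by apply: h; have [e _] := proj1 (mem_box pi r s) (hl s hs); rewrite -e.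
Qed.

Lemma measatom r s : s \in box pi r -> measurable [set w | atomb s (Sig w)].
Proof.
move=> hs; have -> : [set w | atomb s (Sig w)] = U [:: s].
  by apply/seteqP; split => w /=; rewrite /U /= orbF.
by apply: (measU (r := r)) => x; rewrite inE => /eqP ->.
Qed.

Lemma PU r l : uniq l -> {subset l <= box pi r} -> P (U l) = ((size l)%:R * cc r)%:E.
Proof.
elim: l => [|x l IH] /=.
  move=> _ _; have -> : U [::] = set0 by apply/seteqP; split => w.
  by rewrite mul0r measure0.
move=> /andP[xl ul] hsub.
have hx : x \in box pi r by apply: hsub; rewrite inE eqxx.
have hl : {subset l <= box pi r} by move=> y hy; apply: hsub; rewrite inE hy orbT.
have -> : U (x :: l) = [set w | atomb x (Sig w)] `|` U l.
  by apply/seteqP; split => w /=; move/orP.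
rewrite measureU //; first last.
- apply/seteqP; split => w //= [ha /hasP[y hy hb]].
  by move: xl; rewrite (atomb_eq hx (hl y hy) ha hb) hy.
- exact: measU hl.
- exact: measatom hx.
have e1 := atomE hx; have e2 := IH ul hl.
transitivity ((cc r)%:E + ((size l)%:R * cc r)%:E).
  by congr (_ + _).
by rewrite -EFinD mulrSr mulrDl mul1r addrC.
Qed.

Lemma Pbox r : P (U (box pi r)) = 1.
Proof.
rewrite (@PU r (box pi r) (uniq_boxf _ _ _)) // /box size_boxf natr_prod /cc -big_split /=.
rewrite big_seq big1 // => j; rewrite mem_iota => hj.
by rewrite mulfV // pnatr_eq0; have := hpi (r:=j); lia.
Qed.

Lemma prob_dep r F : dep r F ->
  P [set w | F (Sig w)] = ((count (F \o ext) (box pi r))%:R * cc r)%:E.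
Proof.
move=> hF.
have mS : measurable [set w | F (Sig w)] by exact: (@meas_dep r F hF).
have mG : measurable (U (box pi r)) by apply: (@measU r) => x.
rewrite (measureDI P mS mG).
transitivity (0 + ((count (F \o ext) (box pi r))%:R * cc r)%:E); last by rewrite add0e.
congr (_ + _).
  apply/eqP; rewrite eq_le measure_ge0 andbT.
  have e1 : P (~` U (box pi r)) = 0.
    by rewrite probability_setC // Pbox subee.
  rewrite -e1; apply: le_measure.
  - by rewrite inE; apply: measurableD.
  - by rewrite inE; apply: measurableC.
  - by move=> w [].
have -> : [set w | F (Sig w)] `&` U (box pi r) = U (seq.filter (F \o ext) (box pi r)).
  apply/seteqP; split => w /=.
    move=> [hF1 /hasP[s hs ha]]; apply/hasP; exists s => //.
    rewrite mem_filter hs andbT /= -(hF (Sig w)) // => j hj.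
    have [e _] := proj1 (mem_box pi r s) hs.
    by move/allP: ha => /(_ j); rewrite mem_iota e => /(_ ltac:(lia)) /eqP.
  move=> /hasP[s]; rewrite mem_filter => /andP[/= hFs hs] ha; split.
    rewrite (hF (Sig w) (ext s)) // => j hj.
    have [e _] := proj1 (mem_box pi r s) hs.
    by move/allP: ha => /(_ j); rewrite mem_iota e => /(_ ltac:(lia)) /eqP.
  by apply/hasP; exists s.
rewrite -size_filter; apply: PU; first by apply: filter_uniq; apply: uniq_boxf.
by move=> s; rewrite mem_filter => /andP[].
Qed.
End Meas.

Unset Implicit Arguments.

Theorem theorem6 (R : realType) (d : measure_display) (Omega : measurableType d)
  (P : probability Omega R) (pi : nat -> nat) (Sigma : nat -> Omega -> nat)
  (T : nat)
  (hpi : forall r : nat, (0 < r)%N -> (2 <= pi r)%N)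
  (hmeas : forall r k : nat, measurable [set w | Sigma r w = k])
  (hunif : forall r k : nat, (0 < r)%N -> (1 <= k <= pi r)%N ->
     P [set w | Sigma r w = k] = ((pi r)%:R^-1)%:E)
  (hindep : forall (I : seq nat) (k : nat -> nat), uniq I -> all (fun r => (0 < r)%N) I ->
     P (\bigcap_(r in [set` I]) [set w | Sigma r w = k r])
     = \prod_(r <- I) P [set w | Sigma r w = k r])
  (hT : (0 < T)%N) :
  let K := fun (w : Omega) (t r : nat) => Kis pi (fun j => Sigma j w) t r in
  let N := fun w : Omega => [set r : nat | exists t : nat, (1 <= t <= T)%N /\ K w t r] in
  let A := [set r : nat | (0 < r)%N /\ (wbar R pi r <= T%:R)%R] in
  let B := [set r : nat | (0 < r)%N /\ (T%:R^-1)%:E <= P [set w | K w 1%N r]] in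
  counting A <= \int[P]_w counting (N w)
  /\ \int[P]_w counting (N w)
     <= counting B + (T%:R)%:E * P [set w | ~ (exists r, B r /\ K w 1%N r)].
Proof.
move=> K N A B.
have PD := prob_dep hpi hmeas hunif hindep.
have MD := meas_dep (Sigma := Sigma) hmeas.
set Ev := fun i => [set w | has (fun t => Kis pi (Sig Sigma w) t i) (iota 1 T)].
have depE : forall i, dep i (fun sg => has (fun t => Kis pi sg t i) (iota 1 T)).
  by move=> i s s' h; apply: eq_has => t; rewrite /Kis (token_agree pi t h).
have depK : forall i t, dep i (fun sg => Kis pi sg t i).
  by move=> i t s s' h; rewrite /Kis (token_agree pi t h).
have mEv : forall i, measurable (Ev i) by move=> i; apply: MD (depE i).
have hint : \int[P]_w counting (N w) = \sum_(i <oo) P (Ev i).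
  have -> : \int[P]_w counting (N w) = \int[P]_w \sum_(i <oo) (\1_(Ev i) w)%:E.
    apply: eq_integral => w _; rewrite counting_dirac; apply: eq_eseriesr => n _.
    rewrite diracE indicE; suff -> : (n \in N w) = (w \in Ev n) by [].
    apply/idP/idP => /set_mem h; apply/mem_set.
      move: h => [t [ht hK]]; apply/hasP; exists t => //.
      by rewrite mem_iota; lia.
    by move/hasP: h => [t]; rewrite mem_iota => ht hK; exists t; split => //; lia.
  rewrite integral_nneseries //.
  - by apply: eq_eseriesr => n _; rewrite integral_indic // setIT.
  - move=> n; apply/measurable_EFinP; exact: measurable_indic.
have PUl := PU hmeas hunif hindep.
have Pb := Pbox hpi hmeas hunif hindep.
rewrite hint; split.
  rewrite counting_dirac; apply: lee_nneseries => [n _ _|n _].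
    by rewrite diracE lee_fin.
  rewrite diracE; case: (boolP (n \in A)) => hA /=; last exact: measure_ge0.
  move/set_mem: hA => [n0 hw].
  rewrite (PD _ _ (depE n)).
  have -> : count (fun s => has (fun t => Kis pi (ext s) t n) (iota 1 T)) (box pi n)
      = size (box pi n).
    rewrite -count_predT; apply: eq_in_count => s hs /=.
    have [_ hv] := proj1 (mem_box pi n s) hs.
    have [t [ht htok]] := lower_main hpi n0 hv hw.
    apply/hasP; exists t; first by rewrite mem_iota; lia.
    by rewrite /Kis n0 htok eqxx.
  rewrite -(@PUl n (box pi n) (uniq_boxf _ _ _)) // (Pb n).
  by [].
set Dn := fun n => [set w | ~ B n /\ K w 1%N n].
have mDn : forall n, measurable (Dn n).
  move=> n; have -> : Dn n = [set w | (~~ `[< B n >]) && Kis pi (Sig Sigma w) 1 n].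
    apply/seteqP; split => w /=.
      by move=> [hB hK]; rewrite (asboolF hB); exact: hK.
    by move/andP => [/asboolPn hB hK].
  apply: (@MD n (fun sg => ~~ `[< B n >] && Kis pi sg 1 n)).
  by move=> s s' h /=; rewrite /Kis (token_agree pi 1 h).
have pw : forall n, P (Ev n) <= \d_ n B + (T%:R)%:E * P (Dn n).
  move=> n; case: (pselect (B n)) => hB.
    rewrite diracE mem_set //=.
    apply: le_trans (probability_le1 _ (mEv n)) _; apply: leeDl.
    by apply: mule_ge0 => //; exact: measure_ge0.
  rewrite diracE memNset //= add0e.
  have -> : Dn n = [set w | Kis pi (Sig Sigma w) 1 n].
    by apply/seteqP; split => w /=; [move=> [] | ].
  rewrite (PD _ _ (depE n)) (PD _ _ (depK n 1%N)) -EFinM lee_fin mulrA -natrM.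
  apply: ler_wpM2r; first exact: cc_ge0.
  by rewrite ler_nat; exact: count_Ev_le hpi n T.
apply: (le_trans (y := \sum_(n <oo) (\d_ n B + (T%:R)%:E * P (Dn n)))).
  by apply: lee_nneseries => // n _ _; exact: measure_ge0.
rewrite nneseriesD; first last.
- by move=> n _ _; apply: mule_ge0 => //; exact: measure_ge0.
- by move=> n _ _; exact: measure_ge0.
rewrite -counting_dirac nneseriesZl; last by move=> n _; exact: measure_ge0.
apply: leeD2l; apply: lee_wpmul2l; first by rewrite lee_fin.
have triv : trivIset setT Dn.
  by move=> i j _ _ [w [[_ hi] [_ hj]]]; exact: Kis_uniq hi hj.
have hs : (fun n => \sum_(0 <= i < n) P (Dn i)) @ \oo --> P (\bigcup_n Dn n).
  exact: (@measure_sigma_additive _ _ _ P Dn mDn triv).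
rewrite (cvg_lim _ hs) //.
apply: le_measure.
- by rewrite inE; apply: bigcup_measurable => k _; exact: mDn.
- rewrite inE.
  have -> : [set w | ~ (exists r : nat, B r /\ K w 1%N r)] =
      ~` \bigcup_(r in B) [set w | Kis pi (Sig Sigma w) 1 r].
    apply/seteqP; split => w /=.
      by move=> h [r hr hK]; apply: h; exists r.
    by move=> h [r [hr hK]]; apply: h; exists r.
  apply: measurableC; apply: bigcup_measurable => r _.
  exact: (@MD r (fun sg => Kis pi sg 1 r) (depK r 1%N)).
- move=> w [n _ [hB hK]] [r [hr hK']]; apply: hB.
  by rewrite (Kis_uniq hK hK').
Qed.
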